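(* Let $n\ge1$ and let $w_{12},w_{13},w_{23}$ be real numbers. For the minimal algorithm transferring $n$ disks from Peg 1 to Peg 3, played alternately by Anh (odd-numbered moves) and Bao (even-numbered moves), the total score is $\Delta_{13}(n)=w_{13}$ if $n$ is odd, and $\Delta_{13}(n)=w_{12}+w_{23}-w_{13}$ if $n$ is even.
   Context: Tower of Hanoi on three pegs (labeled 1, 2, 3) with disks $1<2<\dots<n$ ordered by size; a legal move transfers the top disk of one peg to a different peg that is empty or has a larger top disk. A move between Peg $i$ and Peg $j$ (either direction) is a move along edge $\{i,j\}$ and earns the mover the real weight $w_{ij}=w_{ji}$. The minimal algorithm $\mathcal{M}(n;i\to j)$ ($i\ne j$, $k$ the third peg) is defined recursively: $\mathcal{M}(1;i\to j)$ is the single move of disk 1 from $i$ to $j$; for $n\ge2$, $\mathcal{M}(n;i\to j)$ is $\mathcal{M}(n-1;i\to k)$, then the move of disk $n$ from $i$ to $j$, then $\mathcal{M}(n-1;k\to j)$; it has $2^n-1$ moves. When a move sequence is played in the two-player game, Anh makes moves $1,3,5,\dots$ and Bao makes moves $2,4,\dots$; $A_{ij}(n)$ and $B_{ij}(n)$ are the total points of Anh and Bao for $\mathcal{M}(n;i\to j)$, and $\Delta_{ij}(n)=A_{ij}(n)-B_{ij}(n)$. *)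

(* Defs.v *)
From Stdlib Require Import Reals List Arith.
Import ListNotations.
Open Scope R_scope.

(* A move: (disk, source peg, target peg); pegs are 1, 2, 3. *)
Definition move := (nat * nat * nat)%type.

(* The third peg, for distinct i j in {1,2,3}. *)
Definition third (i j : nat) : nat := (6 - i - j)%nat.

(* Minimal algorithm M(n; i -> j); hanoi m corresponds to n = m+1 disks. *)
Fixpoint hanoi_aux (m : nat) (i j : nat) : list move :=
  match m with
  | O => [(1%nat, i, j)]
  | S m' => hanoi_aux m' i (third i j) ++ [(S m, i, j)]
            ++ hanoi_aux m' (third i j) j
  end.

Definition hanoi (n i j : nat) : list move :=
  match n with O => [] | S m => hanoi_aux m i j end.

Definition edge_weight (w12 w13 w23 : R) (a b : nat) : R :=
  match a, b with
  | 1%nat, 2%nat | 2%nat, 1%nat => w12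
  | 1%nat, 3%nat | 3%nat, 1%nat => w13
  | 2%nat, 3%nat | 3%nat, 2%nat => w23
  | _, _ => 0
  end.

Definition move_weight (w12 w13 w23 : R) (mv : move) : R :=
  let '(_, a, b) := mv in edge_weight w12 w13 w23 a b.

(* Points of Anh (moves 1,3,5,...) and Bao (moves 2,4,...). *)
Fixpoint anh_score (w12 w13 w23 : R) (s : list move) : R :=
  match s with
  | [] => 0
  | mv :: t => move_weight w12 w13 w23 mv + bao_score w12 w13 w23 t
  end
with bao_score (w12 w13 w23 : R) (s : list move) : R :=
  match s with
  | [] => 0
  | _ :: t => anh_score w12 w13 w23 t
  end.

Definition hanoi_Delta (w12 w13 w23 : R) (n i j : nat) : R :=
  anh_score w12 w13 w23 (hanoi n i j) - bao_score w12 w13 w23 (hanoi n i j).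

(* Main.v *)
Require Import Defs.
From Stdlib Require Import Reals Arith Lra List.
Import ListNotations.
Open Scope R_scope.

Lemma scores_app w12 w13 w23 (l1 l2 : list move) :
  (anh_score w12 w13 w23 (l1 ++ l2) =
     anh_score w12 w13 w23 l1 + (if Nat.even (length l1) then anh_score w12 w13 w23 l2 else bao_score w12 w13 w23 l2)) /\
  (bao_score w12 w13 w23 (l1 ++ l2) =
     bao_score w12 w13 w23 l1 + (if Nat.even (length l1) then bao_score w12 w13 w23 l2 else anh_score w12 w13 w23 l2)).
Proof.
  induction l1 as [|x t IH]; cbn [app anh_score bao_score length].
  - simpl; split; lra.
  - destruct IH as [IH1 IH2]. rewrite IH1, IH2.
    rewrite Nat.even_succ, <- Nat.negb_even.
    destruct (Nat.even (length t)); simpl; split; lra.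
Qed.

Definition D w12 w13 w23 l := anh_score w12 w13 w23 l - bao_score w12 w13 w23 l.

Lemma len_aux m i j : Nat.even (length (hanoi_aux m i j)) = false.
Proof.
  revert i j; induction m; intros i j; simpl; auto.
  rewrite !length_app. simpl.
  rewrite Nat.even_add, Nat.even_succ, <- Nat.negb_even, IHm, IHm. reflexivity.
Qed.

Lemma D_step w12 w13 w23 m i j :
  D w12 w13 w23 (hanoi_aux (S m) i j) =
  D w12 w13 w23 (hanoi_aux m i (third i j)) - edge_weight w12 w13 w23 i j
  + D w12 w13 w23 (hanoi_aux m (third i j) j).
Proof.
  unfold D. change (hanoi_aux (S m) i j) with (hanoi_aux m i (third i j) ++ [(S (S m), i, j)] ++ hanoi_aux m (third i j) j).
  destruct (scores_app w12 w13 w23 (hanoi_aux m i (third i j))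
     ([(S (S m), i, j)] ++ hanoi_aux m (third i j) j)) as [A B].
  rewrite A, B, len_aux. simpl. lra.
Qed.

Lemma main w12 w13 w23 m :
  (Nat.even m = true ->
   D w12 w13 w23 (hanoi_aux m 1 3) = w13 /\ D w12 w13 w23 (hanoi_aux m 3 1) = w13 /\
   D w12 w13 w23 (hanoi_aux m 1 2) = w12 /\ D w12 w13 w23 (hanoi_aux m 2 1) = w12 /\
   D w12 w13 w23 (hanoi_aux m 2 3) = w23 /\ D w12 w13 w23 (hanoi_aux m 3 2) = w23) /\
  (Nat.even m = false ->
   D w12 w13 w23 (hanoi_aux m 1 3) = w12 + w23 - w13 /\ D w12 w13 w23 (hanoi_aux m 3 1) = w12 + w23 - w13 /\
   D w12 w13 w23 (hanoi_aux m 1 2) = w13 + w23 - w12 /\ D w12 w13 w23 (hanoi_aux m 2 1) = w13 + w23 - w12 /\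
   D w12 w13 w23 (hanoi_aux m 2 3) = w12 + w13 - w23 /\ D w12 w13 w23 (hanoi_aux m 3 2) = w12 + w13 - w23).
Proof.
  induction m as [|m [IHe IHo]].
  - split; intros H; [|discriminate]. unfold D; simpl. repeat split; lra.
  - rewrite !D_step. unfold third. cbn [Nat.sub edge_weight].
    rewrite Nat.even_succ, <- Nat.negb_even.
    destruct (Nat.even m) eqn:E; simpl; split; intros H; try discriminate.
    + destruct (IHe eq_refl) as (a&b&c&d&e&f). rewrite a,b,c,d,e,f. repeat split; lra.
    + destruct (IHo eq_refl) as (a&b&c&d&e&f). rewrite a,b,c,d,e,f. repeat split; lra.
Qed.

Theorem lemma1 (n : nat) (w12 w13 w23 : R) (hn : (1 <= n)%nat) :
  hanoi_Delta w12 w13 w23 n 1%nat 3%nat =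
    (if Nat.odd n then w13 else (w12 + w23 - w13)%R).
Proof.
  destruct n as [|m]; [inversion hn|].
  unfold hanoi_Delta, hanoi. fold (D w12 w13 w23 (hanoi_aux m 1 3)).
  rewrite <- Nat.negb_even, Nat.even_succ, <- Nat.negb_even, Bool.negb_involutive.
  destruct (main w12 w13 w23 m) as [He Ho].
  destruct (Nat.even m) eqn:E.
  - apply He; reflexivity.
  - apply Ho; reflexivity.
Qed.
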